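(* Let $k\in\mathbb{N}$ and let $\{f_n\}$ be a sequence of functions in $\mathcal{L}^{(k)}_0$ converging to $0$ pointwise on $T$ and such that $\{\|f_n\|_k\}$ is bounded. Then $f_n\to0$ weakly in $\mathcal{L}^{(k)}_0$.
   Context: $T$ is a tree (locally finite, connected, simply connected graph, identified with its vertex set) without terminal vertices, rooted at $o$. $|v|$ is the distance from $o$ to $v$; for $v\ne o$, $v^-$ is the parent of $v$. $T^*=T\setminus\{o\}$, $Df(v)=|f(v)-f(v^-)|$. For $x\ge1$: $\ell_0(x)=1$, $\ell_1(x)=1+\ln x$, $\ell_j(x)=1+\ln\ell_{j-1}(x)$ for $j\ge2$. $\mathcal{L}^{(k)}$ is the space of $f:T\to\mathbb{C}$ with $\sup_{v\in T^*}|v|\prod_{j=0}^{k-1}\ell_j(|v|)Df(v)<\infty$, normed by $\|f\|_k=|f(o)|+\sup_{v\in T^*}|v|\prod_{j=0}^{k-1}\ell_j(|v|)Df(v)$; $\mathcal{L}^{(k)}_0$ is its subspace (with the same norm) of $f$ with $\lim_{|v|\to\infty}|v|\prod_{j=0}^{k-1}\ell_j(|v|)Df(v)=0$. *)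

(* Defs.v *)
From Stdlib Require Import Reals List.
From Coquelicot Require Import Coquelicot.
Open Scope R_scope.

(* The graph on [vtx]
   has an edge between u and v iff one is the parent of the other (and is not
   the root).  [depth] is the number of parent steps to the root, i.e. the
   graph distance |v| to the root.  Since depth strictly decreases along the
   parent map, the graph is connected and simply connected (a tree). *)
Record rooted_tree := {
  vtx :> Type;
  root : vtx;
  parent : vtx -> vtx;
  depth : vtx -> nat;
  depth_root : depth root = 0%nat;
  depth_parent : forall v, v <> root -> depth v = S (depth (parent v));
  depth_zero : forall v, depth v = 0%nat -> v = root;
  locally_finite : forall v, exists l : list vtx,
      forall u, (u <> root /\ parent u = v) \/ (v <> root /\ parent v = u) -> In u l;
  no_terminal : forall v, ~ (exists w, forall u,
      ((u <> root /\ parent u = v) \/ (v <> root /\ parent v = u)) <-> u = w)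
}.

Fixpoint ell (j : nat) (x : R) : R :=
  match j with
  | O => 1
  | S j' => match j' with
            | O => 1 + ln x
            | S _ => 1 + ln (ell j' x)
            end
  end.

Fixpoint ell_prod (k : nat) (x : R) : R :=
  match k with
  | O => 1
  | S k' => ell_prod k' x * ell k' x
  end.

Definition weight (k : nat) (n : nat) : R := INR n * ell_prod k (INR n).

Definition Df {T : rooted_tree} (f : T -> C) (v : T) : R :=
  Cmod (f v - f (parent T v))%C.

Definition in_Lk {T : rooted_tree} (k : nat) (f : T -> C) : Prop :=
  exists M : R, forall v : T, v <> root T -> weight k (depth T v) * Df f v <= M.

Definition in_Lk0 {T : rooted_tree} (k : nat) (f : T -> C) : Prop :=
  in_Lk k f /\
  forall eps : R, 0 < eps -> exists N : nat, forall v : T,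
      v <> root T -> (N <= depth T v)%nat -> weight k (depth T v) * Df f v < eps.

(* ||f||_k = |f(o)| + sup_{v in T*} |v| prod ell_j(|v|) Df(v)
   (the sup over an empty T* is taken to be 0) *)
Definition knorm {T : rooted_tree} (k : nat) (f : T -> C) : R :=
  Cmod (f (root T)) +
  real (Lub_Rbar (fun x => exists v : T, v <> root T /\ x = weight k (depth T v) * Df f v)).

Definition bounded_linear_functional_L0 {T : rooted_tree} (k : nat) (phi : (T -> C) -> C) : Prop :=
  (forall f g, in_Lk0 k f -> in_Lk0 k g -> phi (fun v => f v + g v)%C = (phi f + phi g)%C) /\
  (forall (a : C) f, in_Lk0 k f -> phi (fun v => a * f v)%C = (a * phi f)%C) /\
  (exists c : R, forall f, in_Lk0 k f -> Cmod (phi f) <= c * knorm k f).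

Definition weakly_to_zero_L0 {T : rooted_tree} (k : nat) (fs : nat -> T -> C) : Prop :=
  forall phi, bounded_linear_functional_L0 k phi ->
    is_lim_seq (fun n => Cmod (phi (fs n))) 0.

(* Main.v *)
Require Import Defs.
From Stdlib Require Import Reals Lra Lia List Arith.
From Stdlib Require Import ClassicalEpsilon FunctionalExtensionality Classical.
From Coquelicot Require Import Coquelicot.
Open Scope R_scope.

Section Tree.
Variable T : rooted_tree.
Notation o := (root T).
Notation par := (parent T).
Notation dep := (depth T).

Definition Tdec (x y : T) : {x = y} + {x <> y} := excluded_middle_informative (x = y).

Fixpoint iterp (m : nat) (v : T) : T :=
  match m with O => v | S m' => iterp m' (par v) end.

Lemma iterp_S m v : iterp (S m) v = par (iterp m v).
Proof. revert v; induction m; intros v; simpl; [reflexivity|]. apply (IHm (par v)). Qed.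

Lemma nonroot_dep v : (1 <= dep v)%nat -> v <> o.
Proof. intros H E; subst; rewrite depth_root in H; lia. Qed.

Lemma dep_par v : v <> o -> dep v = S (dep (par v)).
Proof. apply depth_parent. Qed.

Lemma dep_iterp m v : (m <= dep v)%nat -> dep (iterp m v) = (dep v - m)%nat.
Proof.
  revert v; induction m; intros v H; simpl; [lia|].
  assert (Hv : v <> o) by (apply nonroot_dep; lia).
  pose proof (dep_par v Hv). rewrite IHm; lia.
Qed.

Definition anc (N : nat) (v : T) : T := iterp (dep v - N) v.

Lemma anc_le N v : (dep v <= N)%nat -> anc N v = v.
Proof. intros H; unfold anc; replace (dep v - N)%nat with 0%nat by lia; reflexivity. Qed.

Lemma anc_dep N v : (N <= dep v)%nat -> dep (anc N v) = N.
Proof. intros H; unfold anc; rewrite dep_iterp; lia. Qed.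

Lemma anc_par N v : (N < dep v)%nat -> anc N v = anc N (par v).
Proof.
  intros H. assert (Hv : v <> o) by (apply nonroot_dep; lia).
  pose proof (dep_par v Hv). unfold anc.
  replace (dep v - N)%nat with (S (dep (par v) - N)) by lia. reflexivity.
Qed.

Lemma anc_pred K v : (1 <= K)%nat -> (K <= dep v)%nat -> anc (K - 1) v = par (anc K v).
Proof.
  intros H1 H2. unfold anc.
  replace (dep v - (K - 1))%nat with (S (dep v - K)) by lia. apply iterp_S.
Qed.

Lemma anc_root N : anc N o = o.
Proof. apply anc_le. rewrite depth_root; lia. Qed.

Lemma anc0 v : anc 0 v = o.
Proof. apply depth_zero. apply anc_dep. lia. Qed.

Definition e (u v : T) : C := if Tdec (anc (dep u) v) u then RtoC 1 else RtoC 0.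

Lemma e_root u : (1 <= dep u)%nat -> e u o = RtoC 0.
Proof.
  intros H. unfold e. rewrite anc_root. destruct (Tdec o u) as [E|E]; [|reflexivity].
  subst. rewrite depth_root in H; lia.
Qed.

Lemma e_incr u v : v <> o -> (e u v - e u (par v))%C = if Tdec v u then RtoC 1 else RtoC 0.
Proof.
  intros Hv. pose proof (dep_par v Hv) as Hd. unfold e.
  destruct (Compare_dec.lt_eq_lt_dec (dep v) (dep u)) as [[Hl|Hl]|Hl].
  - rewrite (anc_le (dep u) v) by lia. rewrite (anc_le (dep u) (par v)) by lia.
    destruct (Tdec v u) as [E|E]; [subst; lia|].
    destruct (Tdec (par v) u) as [E2|E2]; [subst; lia|]. ring.
  - rewrite (anc_le (dep u) v) by lia. rewrite (anc_le (dep u) (par v)) by lia.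
    destruct (Tdec (par v) u) as [E2|E2]; [subst; lia|].
    destruct (Tdec v u); ring.
  - rewrite (anc_par (dep u) v) by lia.
    destruct (Tdec v u) as [E|E]; [subst; lia|].
    destruct (Tdec (anc (dep u) (par v)) u); ring.
Qed.

Fixpoint lsum (l : list T) (F : T -> C) : C :=
  match l with nil => RtoC 0 | u :: l' => (F u + lsum l' F)%C end.
Fixpoint rsum (l : list T) (F : T -> R) : R :=
  match l with nil => 0 | u :: l' => F u + rsum l' F end.

Lemma lsum_ext l F G : (forall u, In u l -> F u = G u) -> lsum l F = lsum l G.
Proof.
  induction l; intros H; simpl; [reflexivity|].
  rewrite H by (left; auto). rewrite IHl by (intros; apply H; right; auto). reflexivity.
Qed.

Lemma rsum_le l F G : (forall u, In u l -> F u <= G u) -> rsum l F <= rsum l G.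
Proof.
  induction l; intros H; simpl; [lra|].
  assert (F a <= G a) by (apply H; left; auto).
  assert (rsum l F <= rsum l G) by (apply IHl; intros; apply H; right; auto). lra.
Qed.

Lemma rsum_scal l M F : rsum l (fun u => M * F u) = M * rsum l F.
Proof. induction l; simpl; [ring|]. rewrite IHl; ring. Qed.

Lemma rsum_nonneg l F : (forall u, In u l -> 0 <= F u) -> 0 <= rsum l F.
Proof.
  induction l; intros H; simpl; [lra|].
  assert (0 <= F a) by (apply H; left; auto).
  assert (0 <= rsum l F) by (apply IHl; intros; apply H; right; auto). lra.
Qed.

Lemma lsum_cmod l F : Cmod (lsum l F) <= rsum l (fun u => Cmod (F u)).
Proof.
  induction l; simpl.
  - rewrite Cmod_0; lra.
  - eapply Rle_trans; [apply Cmod_triangle|]. lra.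
Qed.

Lemma lsum_RtoC l F : lsum l (fun u => RtoC (F u)) = RtoC (rsum l F).
Proof. induction l; simpl; [reflexivity|]. rewrite IHl, RtoC_plus. reflexivity. Qed.

Lemma lsum_minus l F G : (lsum l F - lsum l G)%C = lsum l (fun u => F u - G u)%C.
Proof. induction l; simpl; [ring|]. rewrite <- IHl. ring. Qed.

Lemma lsum_zero l F : (forall u, In u l -> F u = RtoC 0) -> lsum l F = RtoC 0.
Proof.
  induction l; intros H; simpl; [reflexivity|].
  rewrite H by (left; auto). rewrite IHl by (intros; apply H; right; auto). ring.
Qed.

Lemma lsum_single l v F : NoDup l ->
  lsum l (fun u => if Tdec v u then F u else RtoC 0) =
  if in_dec Tdec v l then F v else RtoC 0.
Proof.
  induction l; intros Hn; simpl; [reflexivity|].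
  inversion Hn; subst.
  destruct (Tdec v a) as [E|E].
  - subst. rewrite lsum_zero. 
    + destruct (Tdec a a) as [_|C0]; [|congruence]. ring.
    + intros u Hu. destruct (Tdec a u); [subst; contradiction|reflexivity].
  - rewrite IHl by auto. destruct (in_dec Tdec v l) as [I|I].
    + destruct (Tdec a v); [congruence|]. ring.
    + destruct (Tdec a v); [congruence|]. ring.
Qed.

Lemma children_list (l : list T) : exists L, forall v u, In v l -> u <> o -> par u = v -> In u L.
Proof.
  induction l as [|v l IH].
  - exists nil; intros v u H; destruct H.
  - destruct IH as [L HL]. destruct (locally_finite T v) as [l1 H1].
    exists (l1 ++ L). intros w u Hw Hu Hp. apply in_or_app.
    destruct Hw as [Hw|Hw].
    + left. subst. apply H1. left; auto.
    + right. eapply HL; eauto.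
Qed.

Lemma levels_exist j : exists l, NoDup l /\ forall u, In u l <-> dep u = j.
Proof.
  induction j as [|j IH].
  - exists (o :: nil). split.
    + constructor; [intros []|constructor].
    + intros u; split.
      * intros [H|[]]; subst; apply depth_root.
      * intros H; left; symmetry; apply depth_zero; auto.
  - destruct IH as [l [Hn Hl]]. destruct (children_list l) as [L HL].
    exists (nodup Tdec (filter (fun u => if Nat.eq_dec (dep u) (S j) then true else false) L)).
    split; [apply NoDup_nodup|].
    intros u. rewrite nodup_In, filter_In. split.
    + intros [_ H]. destruct (Nat.eq_dec (dep u) (S j)); [auto|discriminate].
    + intros H. split.
      * assert (Hu : u <> o) by (apply nonroot_dep; lia).
        pose proof (dep_par u Hu).
        apply (HL (par u)); auto. apply Hl. lia.
      * destruct (Nat.eq_dec (dep u) (S j)); [auto|contradiction].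
Qed.

Definition level (j : nat) : list T :=
  proj1_sig (constructive_indefinite_description _ (levels_exist j)).

Lemma level_spec j : NoDup (level j) /\ forall u, In u (level j) <-> dep u = j.
Proof. unfold level. exact (proj2_sig (constructive_indefinite_description _ (levels_exist j))). Qed.

Lemma tree_ext (g h : T -> C) : g o = h o ->
  (forall v, v <> o -> (g v - g (par v))%C = (h v - h (par v))%C) -> forall v, g v = h v.
Proof.
  intros H0 Hd.
  assert (forall n v, dep v = n -> g v = h v).
  { induction n; intros v Hv.
    - rewrite (depth_zero T v Hv). auto.
    - assert (Hu : v <> o) by (apply nonroot_dep; lia).
      pose proof (dep_par v Hu).
      replace (g v) with (g (par v) + (g v - g (par v)))%C by ring.
      replace (h v) with (h (par v) + (h v - h (par v)))%C by ring.
      rewrite Hd by auto. rewrite (IHn (par v)) by lia. reflexivity. }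
  intros v; eauto.
Qed.

End Tree.

Lemma ln_ge0 y : 1 <= y -> 0 <= ln y.
Proof.
  intros H. destruct (Req_dec y 1) as [E|E].
  - subst; rewrite ln_1; lra.
  - rewrite <- ln_1. left. apply ln_increasing; lra.
Qed.

Lemma ell_ge1 j x : 1 <= x -> 1 <= ell j x.
Proof.
  intros Hx. induction j as [|j IH]; simpl; [lra|].
  destruct j.
  - pose proof (ln_ge0 x Hx). lra.
  - pose proof (ln_ge0 _ IH). lra.
Qed.

Lemma ell_prod_ge1 k x : 1 <= x -> 1 <= ell_prod k x.
Proof.
  intros Hx. induction k; simpl; [lra|].
  pose proof (ell_ge1 k x Hx). nra.
Qed.

Lemma weight_pos k n : (1 <= n)%nat -> 0 < weight k n.
Proof.
  intros H. unfold weight. assert (1 <= INR n) by (apply (le_INR 1); auto).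
  pose proof (ell_prod_ge1 k (INR n) H0). nra.
Qed.

Lemma weight_nonneg k n : 0 <= weight k n.
Proof.
  destruct n. unfold weight; simpl; lra.
  left; apply weight_pos; lia.
Qed.

Section Ana.
Variable T : rooted_tree.
Variable k : nat.
Notation o := (root T).
Notation par := (parent T).
Notation dep := (depth T).

Lemma Df_nonneg (f : T -> C) v : 0 <= Df f v.
Proof. apply Cmod_ge_0. Qed.

Lemma knorm_le (f : T -> C) B : 0 <= B ->
  (forall v, v <> o -> weight k (dep v) * Df f v <= B) -> knorm k f <= Cmod (f o) + B.
Proof.
  intros HB H. unfold knorm. apply Rplus_le_compat_l.
  destruct (Lub_Rbar_correct (fun x => exists v : T, v <> o /\ x = weight k (dep v) * Df f v)) as [_ Hl].
  assert (Hb : Rbar_le (Lub_Rbar (fun x => exists v : T, v <> o /\ x = weight k (dep v) * Df f v)) (Finite B)).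
  { apply Hl. intros x [v [Hv ->]]. simpl. apply H; auto. }
  destruct (Lub_Rbar _); simpl in *; auto; contradiction.
Qed.

Lemma knorm_ge (f : T -> C) v : in_Lk k f -> v <> o ->
  weight k (dep v) * Df f v <= knorm k f - Cmod (f o).
Proof.
  intros [M HM] Hv. unfold knorm.
  destruct (Lub_Rbar_correct (fun x => exists v : T, v <> o /\ x = weight k (dep v) * Df f v)) as [Hu Hl].
  assert (Hb : Rbar_le (Lub_Rbar (fun x => exists v : T, v <> o /\ x = weight k (dep v) * Df f v)) (Finite M)).
  { apply Hl. intros x [w [Hw ->]]. simpl. apply HM; auto. }
  assert (Hx := Hu (weight k (dep v) * Df f v) (ex_intro _ v (conj Hv eq_refl))).
  destruct (Lub_Rbar _); simpl in *; try contradiction. lra.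
Qed.

Lemma knorm_nonneg (f : T -> C) : 0 <= knorm k f.
Proof.
  unfold knorm. pose proof (Cmod_ge_0 (f o)).
  destruct (Lub_Rbar_correct (fun x => exists v : T, v <> o /\ x = weight k (dep v) * Df f v)) as [Hu Hl].
  destruct (Lub_Rbar _) eqn:E; simpl; try lra.
  destruct (classic (exists v : T, v <> o)) as [[v Hv]|Hn].
  - assert (Hx := Hu (weight k (dep v) * Df f v) (ex_intro _ v (conj Hv eq_refl))).
    simpl in Hx. pose proof (weight_nonneg k (dep v)). pose proof (Df_nonneg f v). nra.
  - exfalso. assert (Hb : Rbar_le (Finite r) (Finite (r - 1))).
    { apply Hl. intros x [w [Hw _]]. exfalso; apply Hn; eauto. }
    simpl in Hb. lra.
Qed.

Lemma in_Lk0_plus (f g : T -> C) : in_Lk0 k f -> in_Lk0 k g -> in_Lk0 k (fun v => f v + g v)%C.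
Proof.
  intros [[M1 H1] E1] [[M2 H2] E2].
  assert (Hd : forall v, Df (fun v => f v + g v)%C v <= Df f v + Df g v).
  { intros v. unfold Df.
    replace (f v + g v - (f (par v) + g (par v)))%C with ((f v - f (par v)) + (g v - g (par v)))%C by ring.
    apply Cmod_triangle. }
  split.
  - exists (M1 + M2). intros v Hv. pose proof (H1 v Hv). pose proof (H2 v Hv).
    pose proof (Hd v). pose proof (weight_nonneg k (dep v)).
    eapply Rle_trans; [apply Rmult_le_compat_l; eauto|]. lra.
  - intros eps He. destruct (E1 (eps/2)) as [N1 HN1]; [lra|].
    destruct (E2 (eps/2)) as [N2 HN2]; [lra|].
    exists (max N1 N2). intros v Hv HN.
    pose proof (HN1 v Hv ltac:(lia)). pose proof (HN2 v Hv ltac:(lia)).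
    pose proof (Hd v). pose proof (weight_nonneg k (dep v)).
    eapply Rle_lt_trans; [apply Rmult_le_compat_l; eauto|]. lra.
Qed.

Lemma in_Lk0_scal (a : C) (f : T -> C) : in_Lk0 k f -> in_Lk0 k (fun v => a * f v)%C.
Proof.
  intros [[M1 H1] E1].
  assert (Hd : forall v, Df (fun v => a * f v)%C v = Cmod a * Df f v).
  { intros v. unfold Df. rewrite <- Cmod_mult. f_equal. ring. }
  pose proof (Cmod_ge_0 a).
  split.
  - exists (Cmod a * M1). intros v Hv. rewrite Hd. pose proof (H1 v Hv).
    replace (weight k (dep v) * (Cmod a * Df f v)) with (Cmod a * (weight k (dep v) * Df f v)) by ring.
    apply Rmult_le_compat_l; auto.
  - intros eps He. destruct (E1 (eps / (Cmod a + 1))) as [N1 HN1].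
    { apply Rdiv_lt_0_compat; lra. }
    exists N1. intros v Hv HN. rewrite Hd. pose proof (HN1 v Hv HN).
    replace (weight k (dep v) * (Cmod a * Df f v)) with (Cmod a * (weight k (dep v) * Df f v)) by ring.
    pose proof (weight_nonneg k (dep v)). pose proof (Df_nonneg f v).
    apply Rle_lt_trans with ((Cmod a + 1) * (weight k (dep v) * Df f v)); [nra|].
    replace eps with ((Cmod a + 1) * (eps / (Cmod a + 1))) by (field; lra).
    apply Rmult_lt_compat_l; lra.
Qed.

Lemma in_Lk0_const (a : C) : in_Lk0 k (fun _ : T => a).
Proof.
  assert (Hd : forall v, Df (fun _ : T => a) v = 0).
  { intros v; unfold Df. replace (a - a)%C with (RtoC 0) by ring. apply Cmod_0. }
  split.
  - exists 0. intros v _. rewrite Hd. lra.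
  - intros eps He. exists 0%nat. intros v _ _. rewrite Hd. lra.
Qed.

Lemma in_Lk0_e u : in_Lk0 k (e T u).
Proof.
  assert (Hd : forall v, v <> o -> Df (e T u) v = if Tdec T v u then 1 else 0).
  { intros v Hv. unfold Df. rewrite e_incr by auto. destruct (Tdec T v u).
    apply Cmod_1. apply Cmod_0. }
  split.
  - exists (weight k (dep u)). intros v Hv. rewrite Hd by auto.
    destruct (Tdec T v u). subst; lra. pose proof (weight_nonneg k (dep u)). lra.
  - intros eps He. exists (S (dep u)). intros v Hv HN. rewrite Hd by auto.
    destruct (Tdec T v u). subst; lia. lra.
Qed.

End Ana.

Section Phi.
Variable T : rooted_tree.
Variable k : nat.
Notation o := (root T).
Notation par := (parent T).
Notation dep := (depth T).
Variable phi : (T -> C) -> C.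
Hypothesis hadd : forall f g, in_Lk0 k f -> in_Lk0 k g -> phi (fun v => f v + g v)%C = (phi f + phi g)%C.
Hypothesis hsc : forall (a : C) f, in_Lk0 k f -> phi (fun v => a * f v)%C = (a * phi f)%C.

Lemma phi_zero : phi (fun _ => RtoC 0) = RtoC 0.
Proof.
  pose proof (hsc (RtoC 0) (fun _ => RtoC 0) (in_Lk0_const T k _)) as H.
  assert (E : (fun v : T => (RtoC 0 * RtoC 0)%C) = (fun _ => RtoC 0))
    by (apply functional_extensionality; intros; ring).
  cbv beta in H. rewrite E in H. rewrite H. ring.
Qed.

Definition G (l : list T) (c : T -> C) : T -> C := fun v => lsum T l (fun u => c u * e T u v)%C.

Lemma G_L0 l c : in_Lk0 k (G l c).
Proof.
  induction l; simpl.
  - apply in_Lk0_const.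
  - change (in_Lk0 k (fun v => (c a * e T a v) + G l c v)%C).
    apply in_Lk0_plus; auto. apply in_Lk0_scal. apply in_Lk0_e.
Qed.

Lemma phi_G l c : phi (G l c) = lsum T l (fun u => c u * phi (e T u))%C.
Proof.
  induction l; simpl.
  - apply phi_zero.
  - change (phi (fun v => (c a * e T a v) + G l c v)%C = (c a * phi (e T a) + lsum T l (fun u => c u * phi (e T u)))%C).
    rewrite hadd; [|apply in_Lk0_scal, in_Lk0_e|apply G_L0].
    rewrite hsc by apply in_Lk0_e. rewrite IHl. reflexivity.
Qed.

Lemma G_incr l c v : NoDup l -> v <> o ->
  (G l c v - G l c (par v))%C = if in_dec (Tdec T) v l then c v else RtoC 0.
Proof.
  intros Hn Hv. unfold G. rewrite lsum_minus.
  rewrite <- (lsum_single T l v c Hn). apply lsum_ext. intros u _.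
  replace (c u * e T u v - c u * e T u (par v))%C with (c u * (e T u v - e T u (par v)))%C by ring.
  rewrite e_incr by auto. destruct (Tdec T v u); ring.
Qed.

Lemma G_root l c : (forall u, In u l -> (1 <= dep u)%nat) -> G l c o = RtoC 0.
Proof.
  intros H. unfold G. apply lsum_zero. intros u Hu. rewrite e_root by auto. ring.
Qed.

Fixpoint Hf (N : nat) (c : T -> C) : T -> C :=
  match N with O => fun _ => RtoC 0 | S N' => fun v => (Hf N' c v + G (level T (S N')) c v)%C end.

Fixpoint Sf (N : nat) (c : T -> C) : C :=
  match N with O => RtoC 0 | S N' => (Sf N' c + lsum T (level T (S N')) (fun u => c u * phi (e T u)))%C end.

Lemma H_L0 N c : in_Lk0 k (Hf N c).
Proof.
  induction N; simpl. apply in_Lk0_const. apply in_Lk0_plus; auto. apply G_L0.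
Qed.

Lemma phi_H N c : phi (Hf N c) = Sf N c.
Proof.
  induction N; simpl. apply phi_zero.
  rewrite hadd by (auto using H_L0, G_L0). rewrite IHN, phi_G. reflexivity.
Qed.

Lemma H_root N c : Hf N c o = RtoC 0.
Proof.
  induction N; simpl; auto. rewrite IHN, G_root. ring.
  intros u Hu. apply (level_spec T (S N)) in Hu. lia.
Qed.

Lemma H_incr N c v : v <> o ->
  (Hf N c v - Hf N c (par v))%C = if le_dec (dep v) N then c v else RtoC 0.
Proof.
  intros Hv. pose proof (dep_par T v Hv).
  induction N; simpl.
  - destruct (le_dec (dep v) 0); [lia|]. ring.
  - replace (Hf N c v + G (level T (S N)) c v - (Hf N c (par v) + G (level T (S N)) c (par v)))%C
      with ((Hf N c v - Hf N c (par v)) + (G (level T (S N)) c v - G (level T (S N)) c (par v)))%C by ring.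
    rewrite IHN. destruct (level_spec T (S N)) as [Hn Hl].
    rewrite G_incr by auto.
    destruct (in_dec (Tdec T) v (level T (S N))) as [I|I]; apply Hl in I || (assert (dep v <> S N) by (intro E; apply I, Hl, E)).
    + destruct (le_dec (dep v) N); [lia|]. destruct (le_dec (dep v) (S N)); [|lia]. ring.
    + destruct (le_dec (dep v) N); destruct (le_dec (dep v) (S N)); try lia; ring.
Qed.

Definition tr (N : nat) (f : T -> C) : T -> C := fun v => f (anc T N v).

Lemma tr_incr N f v : v <> o ->
  (tr N f v - tr N f (par v))%C = if le_dec (dep v) N then (f v - f (par v))%C else RtoC 0.
Proof.
  intros Hv. pose proof (dep_par T v Hv). unfold tr.
  destruct (le_dec (dep v) N).
  - rewrite (anc_le T N v), (anc_le T N (par v)) by lia. reflexivity.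
  - rewrite (anc_par T N v) by lia. ring.
Qed.

Lemma tr_repr N f : tr N f = fun v => (f o + Hf N (fun u => f u - f (par u)) v)%C.
Proof.
  apply functional_extensionality. apply tree_ext.
  - unfold tr. rewrite anc_root, H_root. ring.
  - intros v Hv. rewrite tr_incr by auto.
    replace (f o + Hf N (fun u => f u - f (par u)) v - (f o + Hf N (fun u => f u - f (par u)) (par v)))%C
      with (Hf N (fun u => f u - f (par u)) v - Hf N (fun u => f u - f (par u)) (par v))%C by ring.
    rewrite H_incr by auto. reflexivity.
Qed.

Lemma tr_L0 N f : in_Lk0 k (tr N f).
Proof.
  rewrite tr_repr. apply in_Lk0_plus. apply in_Lk0_const. apply H_L0.
Qed.

Lemma phi_tr N f : phi (tr N f) = (f o * phi (fun _ => RtoC 1) + Sf N (fun u => f u - f (par u)))%C.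
Proof.
  rewrite tr_repr. rewrite hadd by (apply in_Lk0_const || apply H_L0).
  rewrite phi_H.
  assert (E : (fun _ : T => f o) = (fun v : T => f o * (fun _ => RtoC 1) v)%C)
    by (apply functional_extensionality; intros; simpl; ring).
  rewrite E, hsc by apply in_Lk0_const. reflexivity.
Qed.

End Phi.

Lemma squeeze0 (x y : nat -> R) : (forall n, 0 <= x n <= y n) -> is_lim_seq y 0 -> is_lim_seq x 0.
Proof. intros H Hy. apply (is_lim_seq_le_le (fun _ => 0) x y 0 H (is_lim_seq_const 0) Hy). Qed.

Lemma lim_plus0 (x y : nat -> R) : is_lim_seq x 0 -> is_lim_seq y 0 -> is_lim_seq (fun n => x n + y n) 0.
Proof. intros Hx Hy. pose proof (is_lim_seq_plus' x y 0 0 Hx Hy) as H. rewrite Rplus_0_r in H. exact H. Qed.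

Lemma lim_scal0 (x : nat -> R) a : is_lim_seq x 0 -> is_lim_seq (fun n => x n * a) 0.
Proof.
  intros Hx. pose proof (is_lim_seq_scal_r x a 0 Hx) as H.
  replace (Rbar_mult 0 a) with (Finite 0) in H by (simpl; f_equal; ring). exact H.
Qed.

Lemma rsum_lim (T : rooted_tree) l (F : nat -> T -> R) :
  (forall u, In u l -> is_lim_seq (fun n => F n u) 0) -> is_lim_seq (fun n => rsum T l (F n)) 0.
Proof.
  induction l; intros H; simpl.
  - apply is_lim_seq_const.
  - apply lim_plus0. apply H; left; auto. apply IHl. intros; apply H; right; auto.
Qed.

Section Main.
Variable T : rooted_tree.
Variable k : nat.
Notation o := (root T).
Notation par := (parent T).
Notation dep := (depth T).
Variable phi : (T -> C) -> C.
Hypothesis hadd : forall f g, in_Lk0 k f -> in_Lk0 k g -> phi (fun v => f v + g v)%C = (phi f + phi g)%C.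
Hypothesis hsc : forall (a : C) f, in_Lk0 k f -> phi (fun v => a * f v)%C = (a * phi f)%C.
Variable c' : R.
Hypothesis hc0 : 0 <= c'.
Hypothesis hc : forall f, in_Lk0 k f -> Cmod (phi f) <= c' * knorm k f.

Notation a := (fun u => phi (e T u)).

Fixpoint Qf (N : nat) : R :=
  match N with O => 0 | S N' => Qf N' + rsum T (level T (S N')) (fun u => Cmod (a u) / weight k (dep u)) end.

Definition cstar (u : T) : C :=
  if Ceq_dec (a u) (RtoC 0) then RtoC 0
  else (Cconj (a u) * RtoC (/ (Cmod (a u) * weight k (dep u))))%C.

Lemma cstar_mul u : (1 <= dep u)%nat -> (cstar u * a u)%C = RtoC (Cmod (a u) / weight k (dep u)).
Proof.
  intros Hu. pose proof (weight_pos k _ Hu). unfold cstar.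
  destruct (Ceq_dec (a u) (RtoC 0)) as [E|E].
  - rewrite E, Cmod_0. replace (0 / weight k (dep u)) with 0 by (field; lra). ring.
  - assert (0 < Cmod (a u)) by (apply Cmod_gt_0; auto).
    replace (Cconj (a u) * RtoC (/ (Cmod (a u) * weight k (dep u))) * a u)%C
      with ((a u * Cconj (a u)) * RtoC (/ (Cmod (a u) * weight k (dep u))))%C by ring.
    rewrite <- Cmod2_conj, <- RtoC_mult. f_equal. field. lra.
Qed.

Lemma cstar_mod u : (1 <= dep u)%nat -> weight k (dep u) * Cmod (cstar u) <= 1.
Proof.
  intros Hu. pose proof (weight_pos k _ Hu). unfold cstar.
  destruct (Ceq_dec (a u) (RtoC 0)) as [E|E].
  - rewrite Cmod_0. lra.
  - assert (0 < Cmod (a u)) by (apply Cmod_gt_0; auto).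
    rewrite Cmod_mult, Cmod_conj, Cmod_R, Rabs_pos_eq.
    + right. field. lra.
    + left. apply Rinv_0_lt_compat. nra.
Qed.

Lemma Qf_nonneg N : 0 <= Qf N.
Proof.
  induction N; simpl; [lra|].
  assert (0 <= rsum T (level T (S N)) (fun u => Cmod (a u) / weight k (dep u))); [|lra].
  apply rsum_nonneg. intros u Hu. apply (level_spec T (S N)) in Hu.
  pose proof (weight_pos k (dep u) ltac:(lia)). pose proof (Cmod_ge_0 (a u)).
  apply Rdiv_le_0_compat; lra.
Qed.

Lemma Sf_cstar N : Sf T phi N cstar = RtoC (Qf N).
Proof.
  induction N; simpl; [reflexivity|]. rewrite IHN.
  rewrite (lsum_ext T _ _ (fun u => RtoC (Cmod (a u) / weight k (dep u)))).
  - rewrite lsum_RtoC, RtoC_plus. reflexivity.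
  - intros u Hu. apply (level_spec T (S N)) in Hu. apply cstar_mul. lia.
Qed.

Lemma Q_bound N : Qf N <= c'.
Proof.
  pose proof (hc _ (H_L0 T k N cstar)) as H.
  rewrite (phi_H T k phi hadd hsc), Sf_cstar, Cmod_R, Rabs_pos_eq in H by apply Qf_nonneg.
  eapply Rle_trans; [exact H|].
  rewrite <- (Rmult_1_r c') at 2. apply Rmult_le_compat_l; auto.
  eapply Rle_trans; [apply (knorm_le T k _ 1); [lra|]|].
  - intros v Hv. unfold Df. rewrite H_incr by auto. pose proof (dep_par T v Hv).
    destruct (le_dec (dep v) N).
    + apply cstar_mod. lia.
    + rewrite Cmod_0. lra.
  - rewrite H_root, Cmod_0. lra.
Qed.

Lemma Qf_tail eps : 0 < eps -> exists N, forall K, (N <= K)%nat -> Qf K - Qf N < eps.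
Proof.
  intros He.
  destruct (completeness (fun x => exists K, x = Qf K)) as [m [Hub Hlub]].
  - exists c'. intros x [K ->]. apply Q_bound.
  - exists (Qf 0). eauto.
  - destruct (classic (exists N, m - eps < Qf N)) as [[N HN]|Hn].
    + exists N. intros K _. assert (Qf K <= m) by (apply Hub; eauto). lra.
    + exfalso. assert (m <= m - eps); [|lra]. apply Hlub. intros x [K ->].
      apply Rnot_lt_le. intro; apply Hn; eauto.
Qed.

Lemma Sf_diff (f : T -> C) M N K : 0 <= M ->
  (forall v, v <> o -> weight k (dep v) * Df f v <= M) -> (N <= K)%nat ->
  Cmod (Sf T phi K (fun u => f u - f (par u))%C - Sf T phi N (fun u => f u - f (par u))%C) <= M * (Qf K - Qf N).
Proof.
  intros HM Hf HNK. induction K.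
  - assert (N = 0%nat) by lia. subst. simpl. replace (RtoC 0 - RtoC 0)%C with (RtoC 0) by ring.
    rewrite Cmod_0. lra.
  - destruct (Nat.eq_dec N (S K)) as [E|E].
    + subst. replace (Sf T phi (S K) (fun u => f u - f (par u))%C - Sf T phi (S K) (fun u => f u - f (par u))%C)%C with (RtoC 0) by ring.
      rewrite Cmod_0. lra.
    + specialize (IHK ltac:(lia)). simpl.
      match goal with |- Cmod ((?x + ?y) - ?z) <= _ => replace ((x + y) - z)%C with ((x - z) + y)%C by ring end.
      eapply Rle_trans; [apply Cmod_triangle|].
      eapply Rle_trans; [apply Rplus_le_compat_l, lsum_cmod|].
      replace (M * (Qf K + rsum T (level T (S K)) (fun u => Cmod (a u) / weight k (dep u)) - Qf N))
        with (M * (Qf K - Qf N) + rsum T (level T (S K)) (fun u => M * (Cmod (a u) / weight k (dep u))))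
        by (rewrite rsum_scal; ring).
      apply Rplus_le_compat; auto. apply rsum_le. intros u Hu.
      apply (level_spec T (S K)) in Hu.
      assert (Hu0 : u <> o) by (apply nonroot_dep; lia).
      pose proof (weight_pos k (dep u) ltac:(lia)). pose proof (Hf u Hu0).
      rewrite Cmod_mult. fold (Df f u). pose proof (Cmod_ge_0 (a u)).
      assert (Df f u <= M / weight k (dep u)).
      { apply (Rmult_le_reg_l (weight k (dep u))); auto. field_simplify; lra. }
      replace (M * (Cmod (a u) / weight k (dep u))) with ((M / weight k (dep u)) * Cmod (a u)) by (field; lra).
      apply Rmult_le_compat_r; auto.
Qed.

Lemma Sf_vanish (fs : nat -> T -> C) N : (forall v, is_lim_seq (fun n => Cmod (fs n v)) 0) ->
  is_lim_seq (fun n => Cmod (Sf T phi N (fun u => fs n u - fs n (par u))%C)) 0.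
Proof.
  intros hpt. induction N; simpl.
  - apply (squeeze0 _ (fun _ => 0)); [|apply is_lim_seq_const]. intros; rewrite Cmod_0; lra.
  - apply (squeeze0 _ (fun n => Cmod (Sf T phi N (fun u => fs n u - fs n (par u))%C) +
        rsum T (level T (S N)) (fun u => (Cmod (fs n u) + Cmod (fs n (par u))) * Cmod (a u)))).
    + intros n. split; [apply Cmod_ge_0|].
      eapply Rle_trans; [apply Cmod_triangle|]. apply Rplus_le_compat_l.
      eapply Rle_trans; [apply lsum_cmod|]. apply rsum_le. intros u _.
      rewrite Cmod_mult. apply Rmult_le_compat_r; [apply Cmod_ge_0|].
      unfold Cminus. eapply Rle_trans; [apply Cmod_triangle|]. rewrite Cmod_opp. lra.
    + apply lim_plus0; auto.
      apply (rsum_lim T _ (fun n u => (Cmod (fs n u) + Cmod (fs n (par u))) * Cmod (a u))).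
      intros u _. apply lim_scal0. apply lim_plus0; auto.
Qed.

End Main.

Lemma frac_bound x eps : 0 <= x -> 0 < eps -> x * (eps / (3 * (x + 1))) <= eps / 3.
Proof.
  intros Hx He.
  replace (x * (eps / (3 * (x + 1)))) with (eps / 3 - eps / (3 * (x + 1))) by (field; lra).
  assert (0 < eps / (3 * (x + 1))) by (apply Rdiv_lt_0_compat; lra). lra.
Qed.

Theorem proposition2p11 (T : rooted_tree) (k : nat) (fs : nat -> T -> C) :
  (forall n, in_Lk0 k (fs n)) ->
  (forall v : T, is_lim_seq (fun n => Cmod (fs n v)) 0) ->
  (exists M : R, forall n, knorm k (fs n) <= M) ->
  weakly_to_zero_L0 k fs.
Proof.
  intros hL0 hpt [M hM] phi [hadd [hsc [c hc]]].
  set (c' := Rmax c 0).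
  assert (hc0 : 0 <= c') by apply Rmax_r.
  assert (hc' : forall f, in_Lk0 k f -> Cmod (phi f) <= c' * knorm k f).
  { intros f Hf. eapply Rle_trans; [apply hc; auto|].
    apply Rmult_le_compat_r; [apply knorm_nonneg|apply Rmax_l]. }
  set (M' := Rmax M 0).
  assert (hM0 : 0 <= M') by apply Rmax_r.
  assert (hw : forall n v, v <> root T -> weight k (depth T v) * Df (fs n) v <= M').
  { intros n v Hv. pose proof (knorm_ge T k (fs n) v (proj1 (hL0 n)) Hv).
    pose proof (Cmod_ge_0 (fs n (root T))). pose proof (hM n). pose proof (Rmax_l M 0).
    unfold M'. lra. }
  set (one := phi (fun _ => RtoC 1)).
  apply is_lim_seq_spec. intros eps. pose proof (cond_pos eps) as Heps.
  destruct (Qf_tail T k phi hadd hsc c' hc0 hc' (eps / (3 * (M' + 1)))) as [N HN].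
  { apply Rdiv_lt_0_compat; lra. }
  assert (Hv : is_lim_seq (fun n => Cmod (phi (tr T N (fs n)))) 0).
  { apply (squeeze0 _ (fun n => Cmod (fs n (root T)) * Cmod one +
                               Cmod (Sf T phi N (fun u => fs n u - fs n (parent T u))%C))).
    - intros n; split; [apply Cmod_ge_0|]. rewrite (phi_tr T k phi hadd hsc).
      eapply Rle_trans; [apply Cmod_triangle|]. rewrite Cmod_mult. unfold one. lra.
    - apply lim_plus0. apply lim_scal0, hpt. apply Sf_vanish; auto. }
  apply is_lim_seq_spec in Hv.
  assert (He3 : 0 < eps / 3) by lra.
  destruct (Hv (mkposreal (eps / 3) He3)) as [N2 HN2]. simpl in HN2.
  exists N2. intros n Hn. specialize (HN2 n Hn).
  rewrite Rminus_0_r in *. rewrite Rabs_pos_eq in * by apply Cmod_ge_0.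
  destruct (proj2 (hL0 n) (eps / (3 * (c' + 1)))) as [Kd HKd].
  { apply Rdiv_lt_0_compat; lra. }
  set (K := max N Kd).
  assert (B1 : Cmod (phi (fs n) - phi (tr T K (fs n)))%C <= c' * (eps / (3 * (c' + 1)))).
  { set (g := fun v => (fs n v + (- RtoC 1) * tr T K (fs n) v)%C).
    assert (Hg : phi g = (phi (fs n) - phi (tr T K (fs n)))%C).
    { unfold g. rewrite hadd; [|apply hL0|apply in_Lk0_scal, tr_L0]. rewrite hsc by apply tr_L0. ring. }
    rewrite <- Hg. eapply Rle_trans.
    { apply hc'. unfold g. apply in_Lk0_plus; [apply hL0|apply in_Lk0_scal, tr_L0]. }
    apply Rmult_le_compat_l; auto.
    assert (Hd : 0 < eps / (3 * (c' + 1))) by (apply Rdiv_lt_0_compat; lra).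
    eapply Rle_trans; [apply (knorm_le T k g (eps / (3 * (c' + 1)))); [lra|]|].
    - intros v Hv0. unfold Df, g.
      replace (fs n v + - RtoC 1 * tr T K (fs n) v - (fs n (parent T v) + - RtoC 1 * tr T K (fs n) (parent T v)))%C
        with ((fs n v - fs n (parent T v)) - (tr T K (fs n) v - tr T K (fs n) (parent T v)))%C by ring.
      rewrite tr_incr by auto. destruct (le_dec (depth T v) K).
      + replace (fs n v - fs n (parent T v) - (fs n v - fs n (parent T v)))%C with (RtoC 0) by ring.
        rewrite Cmod_0, Rmult_0_r. lra.
      + replace (fs n v - fs n (parent T v) - RtoC 0)%C with (fs n v - fs n (parent T v))%C by ring.
        left. apply HKd; auto. unfold K in n0. lia.
    - unfold g, tr. rewrite anc_root.
      replace (fs n (root T) + - RtoC 1 * fs n (root T))%C with (RtoC 0) by ring. rewrite Cmod_0. lra. }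
  assert (B2 : Cmod (phi (tr T K (fs n)) - phi (tr T N (fs n)))%C <= M' * (eps / (3 * (M' + 1)))).
  { rewrite !(phi_tr T k phi hadd hsc).
    match goal with |- Cmod ((?x + ?a) - (?x + ?b))%C <= _ =>
      replace ((x + a) - (x + b))%C with (a - b)%C by ring end.
    eapply Rle_trans; [apply (Sf_diff T k phi (fs n) M'); auto; unfold K; lia|].
    apply Rmult_le_compat_l; auto. left; apply HN; unfold K; lia. }
  replace (phi (fs n)) with ((phi (fs n) - phi (tr T K (fs n))) + (phi (tr T K (fs n)) - phi (tr T N (fs n))) + phi (tr T N (fs n)))%C by ring.
  pose proof (frac_bound c' eps hc0 Heps). pose proof (frac_bound M' eps hM0 Heps).
  eapply Rle_lt_trans; [apply Cmod_triangle|].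
  eapply Rle_lt_trans; [apply Rplus_le_compat_r, Cmod_triangle|]. lra.
Qed.
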